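(* Let $\triangle_{\delta,\varepsilon}$ be a sparse coloured triangle and let $\gamma$ be an integer. Suppose two distinct black dots $(\alpha,\gamma')$ and $(\beta,\delta')$ of $\triangle_{\delta,\varepsilon}$ both lie on or above the line $l_\gamma$, i.e. $\alpha\le\gamma\le\gamma'$ and $\beta\le\gamma\le\delta'$. Then either both dots lie on $l_\gamma$ (i.e. each has $\gamma$ as one of its coordinates), or they are comparable in the partial order $\preceq$.
   Context: Dots are pairs of integers $(\alpha,\beta)$. For integers $\delta<\varepsilon$, the triangle $\triangle_{\delta,\varepsilon}$ is the set of dots $(\alpha,\beta)$ with $\delta\le\alpha$, $\beta\le\varepsilon$ and $\beta-\alpha\ge 2$; its vertex is $(\delta,\varepsilon)$ and its height is $\varepsilon-\delta-1$. For a dot $(\alpha,\beta)\in\triangle_{\delta,\varepsilon}$, the sub-triangle $\triangle_{\alpha,\beta}$ is defined by the same rule (it is contained in $\triangle_{\delta,\varepsilon}$). A coloured triangle is a triangle in which each dot is coloured black or white. A coloured triangle $\triangle_{\delta,\varepsilon}$ is sparse if for every dot $(\alpha,\beta)\in\triangle_{\delta,\varepsilon}$ (including the vertex) the number of black dots in $\triangle_{\alpha,\beta}$ is at most $\beta-\alpha-1$, with equality if and only if $(\alpha,\beta)$ is black. The line $l_\gamma$ is the set of dots having $\gamma$ as one of their coordinates; a dot $(\alpha,\beta)$ lies on or above $l_\gamma$ if $\alpha\le\gamma\le\beta$. The partial order is $(\alpha,\gamma)\preceq(\beta,\delta)$ iff $\alpha\ge\beta$ and $\gamma\le\delta$. 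*)

(* Defs.v *)
From Stdlib Require Import ZArith List Lia.
Import ListNotations.
Open Scope Z_scope.

Definition dot := (Z * Z)%type.

(* A colouring: true = black, false = white. Only its values on dots of the
   triangle under consideration matter. *)
Definition colouring := dot -> bool.

Definition in_tri (d e : Z) (p : dot) : Prop :=
  d <= fst p /\ snd p <= e /\ snd p - fst p >= 2.

Definition in_trib (d e : Z) (p : dot) : bool :=
  (d <=? fst p) && (snd p <=? e) && (2 <=? snd p - fst p).

Definition zrange (d e : Z) : list Z :=
  map (fun k => d + Z.of_nat k) (seq 0 (Z.to_nat (e - d + 1))).

Definition tri_dots (d e : Z) : list dot :=
  filter (in_trib d e) (list_prod (zrange d e) (zrange d e)).

Definition black_count (c : colouring) (a b : Z) : Z :=
  Z.of_nat (length (filter c (tri_dots a b))).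

Definition sparse (c : colouring) (d e : Z) : Prop :=
  forall a b, in_tri d e (a, b) ->
    black_count c a b <= b - a - 1 /\
    (black_count c a b = b - a - 1 <-> c (a, b) = true).

Definition on_line (g : Z) (p : dot) : Prop := fst p = g \/ snd p = g.

Definition preceq (p q : dot) : Prop := fst p >= fst q /\ snd p <= snd q.

(* Main.v *)
Require Import Defs.
From Stdlib Require Import ZArith List Lia Permutation.
Import ListNotations.
Open Scope Z_scope. Open Scope bool_scope.

Lemma zrange_In x y k : In k (zrange x y) <-> x <= k <= y.
Proof.
  unfold zrange; rewrite in_map_iff; split.
  - intros [n [<- Hn]]; apply in_seq in Hn; lia.
  - intros H; exists (Z.to_nat (k - x)); split; [lia|]. apply in_seq; lia.
Qed.

Lemma zrange_NoDup x y : NoDup (zrange x y).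
Proof.
  unfold zrange; apply FinFun.Injective_map_NoDup; [intros m n H; lia|apply seq_NoDup].
Qed.

Lemma prod_NoDup (l l' : list Z) : NoDup l -> NoDup l' -> NoDup (list_prod l l').
Proof.
  induction 1 as [|x l Hx Hl IH]; intros H'; simpl; [constructor|].
  apply NoDup_app.
  - apply FinFun.Injective_map_NoDup; [intros u v E; now inversion E|assumption].
  - now apply IH.
  - intros [u v] H1 H2. apply in_map_iff in H1. destruct H1 as [w [E _]]. inversion E; subst.
    apply in_prod_iff in H2; tauto.
Qed.

Lemma in_trib_spec x y p : in_trib x y p = true <-> in_tri x y p.
Proof.
  unfold in_trib, in_tri. rewrite !Bool.andb_true_iff, !Z.leb_le. lia.
Qed.

Lemma tri_In x y p : In p (tri_dots x y) <-> in_tri x y p.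
Proof.
  destruct p as [u v]. unfold tri_dots. rewrite filter_In. rewrite (in_prod_iff (zrange x y) (zrange x y) u v), !zrange_In, in_trib_spec.
  unfold in_tri; simpl; lia.
Qed.

Lemma tri_NoDup x y : NoDup (tri_dots x y).
Proof. apply NoDup_filter, prod_NoDup; apply zrange_NoDup. Qed.

Definition cnt (f : dot -> bool) (L : list dot) : Z := Z.of_nat (length (filter f L)).

Lemma bc_sub (c : colouring) x y a b :
  (forall p, in_tri x y p -> in_tri a b p) ->
  black_count c x y = cnt (fun p => c p && in_trib x y p) (tri_dots a b).
Proof.
  intros Hs. unfold black_count, cnt. f_equal. apply Permutation_length.
  apply NoDup_Permutation; try (apply NoDup_filter, tri_NoDup).
  intros p. rewrite !filter_In, Bool.andb_true_iff, in_trib_spec, !tri_In. firstorder.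
Qed.

Definition b2z (b : bool) : Z := if b then 1 else 0.

Lemma cnt_cons f x L : cnt f (x :: L) = b2z (f x) + cnt f L.
Proof. unfold cnt, b2z; simpl; destruct (f x); simpl length; rewrite ?Nat2Z.inj_succ; lia. Qed.



Lemma cnt_ineq (h f12 f1 f2 g : dot -> bool) L :
  (forall x, In x L -> b2z (h x) + b2z (f12 x) >= b2z (f1 x) + b2z (f2 x) + b2z (g x)) ->
  cnt h L + cnt f12 L >= cnt f1 L + cnt f2 L + cnt g L.
Proof.
  induction L as [|x L IH]; intros H.
  - unfold cnt; simpl; lia.
  - rewrite !cnt_cons. pose proof (H x (or_introl eq_refl)).
    assert (IH' := IH (fun y Hy => H y (or_intror Hy))). lia.
Qed.

Lemma cnt_nil_in f L : (forall x, In x L -> f x = false) -> cnt f L = 0.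
Proof.
  induction L as [|x L IH]; intros H; [reflexivity|].
  rewrite cnt_cons, IH by (intros; apply H; now right). rewrite H by now left. reflexivity.
Qed.

Definition deq (q p : dot) : bool := (fst p =? fst q) && (snd p =? snd q).

Lemma deq_spec q p : deq q p = true <-> p = q.
Proof.
  destruct p, q; unfold deq; simpl; rewrite Bool.andb_true_iff, !Z.eqb_eq.
  split; [intros [-> ->]; auto | intros E; inversion E; auto].
Qed.

Lemma cnt_single (c : colouring) q L : NoDup L -> In q L ->
  cnt (fun p => c p && deq q p) L = b2z (c q).
Proof.
  induction 1 as [|x L Hx Hl IH]; intros Hq; [destruct Hq|].
  rewrite cnt_cons. destruct Hq as [<- | Hq].
  - rewrite (proj2 (deq_spec x x) eq_refl), Bool.andb_true_r.
    rewrite cnt_nil_in; [lia|]. intros y Hy. destruct (deq x y) eqn:E; [|apply Bool.andb_false_r].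
    apply deq_spec in E; subst; contradiction.
  - rewrite IH by assumption. destruct (deq q x) eqn:E.
    + apply deq_spec in E; subst; contradiction.
    + rewrite Bool.andb_false_r; simpl; lia.
Qed.

Lemma no_cross (c : colouring) d e a g' b d' :
  sparse c d e -> in_tri d e (a, g') -> in_tri d e (b, d') ->
  c (a, g') = true -> c (b, d') = true -> a < b -> b < g' -> g' < d' -> False.
Proof.
  intros Hs H1 H2 c1 c2 h1 h2 h3.
  unfold in_tri in H1, H2; simpl in H1, H2.
  set (U := tri_dots a d').
  assert (Ha : in_tri d e (a, d')) by (unfold in_tri; simpl; lia).
  destruct (Hs a d' Ha) as [Ba Ea].
  destruct (Hs a g' ltac:(unfold in_tri; simpl; lia)) as [_ Eg]. apply Eg in c1.
  destruct (Hs b d' ltac:(unfold in_tri; simpl; lia)) as [_ Ed]. apply Ed in c2.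
  assert (B12 : cnt (fun p => c p && in_trib b g' p) U <= g' - b - 1).
  { destruct (Z_le_gt_dec 2 (g' - b)) as [Hge|Hlt].
    - destruct (Hs b g' ltac:(unfold in_tri; simpl; lia)) as [B _].
      rewrite bc_sub with (a := a) (b := d') in B; [exact B|].
      intros [u v]; unfold in_tri; simpl; lia.
    - rewrite cnt_nil_in; [lia|]. intros p _. destruct (in_trib b g' p) eqn:E;
        [|apply Bool.andb_false_r]. apply in_trib_spec in E. destruct p; unfold in_tri in E; simpl in E; lia. }
  rewrite bc_sub with (a := a) (b := d') in Ea, Ba, c1, c2
    by (intros [u v]; unfold in_tri; simpl; lia).
  assert (S := cnt_single c (a, d') U (tri_NoDup _ _) ltac:(apply tri_In; unfold in_tri; simpl; lia)).
  assert (I := cnt_ineq (fun p => c p && in_trib a d' p) (fun p => c p && in_trib b g' p)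
     (fun p => c p && in_trib a g' p) (fun p => c p && in_trib b d' p)
     (fun p => c p && deq (a, d') p) U).
  fold U in Ea, Ba, c1, c2.
  assert (Hpt : forall x, In x U -> b2z (c x && in_trib a d' x) + b2z (c x && in_trib b g' x) >=
     b2z (c x && in_trib a g' x) + b2z (c x && in_trib b d' x) + b2z (c x && deq (a, d') x)).
  { intros [u v] _. destruct (c (u, v)); simpl; [|lia].
    unfold in_trib, deq; simpl.
    destruct (Z.leb_spec a u), (Z.leb_spec b u), (Z.leb_spec v d'), (Z.leb_spec v g'),
      (Z.leb_spec 2 (v - u)), (Z.eqb_spec u a), (Z.eqb_spec v d'); simpl; lia. }
  specialize (I Hpt). rewrite S in I.
  destruct (c (a, d')) eqn:Cad; simpl in I.
  - lia.
  - assert (cnt (fun p => c p && in_trib a d' p) U = d' - a - 1) by lia.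
    apply Ea in H. congruence.
Qed.

Theorem mainTheorem1 (c : colouring) (d e g a g' b d' : Z) :
  d < e ->
  sparse c d e ->
  in_tri d e (a, g') -> in_tri d e (b, d') ->
  c (a, g') = true -> c (b, d') = true ->
  (a, g') <> (b, d') ->
  a <= g <= g' -> b <= g <= d' ->
  (on_line g (a, g') /\ on_line g (b, d')) \/
  preceq (a, g') (b, d') \/ preceq (b, d') (a, g').
Proof.
  intros Hde Hs H1 H2 c1 c2 Hne Hg1 Hg2.
  unfold preceq, on_line; simpl.
  destruct (Z_le_gt_dec b a); destruct (Z_le_gt_dec g' d'); try (right; lia).
  - destruct (Z.eq_dec a b); [right; lia|].
    left. destruct (Z_le_gt_dec d' a). { lia. }
    exfalso. eapply (no_cross c d e b d' a g'); eauto; lia.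
  - destruct (Z.eq_dec g' d'); [right; lia|].
    left. destruct (Z_le_gt_dec g' b). { lia. }
    exfalso. eapply (no_cross c d e a g' b d'); eauto; lia.
Qed.
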